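(* Let $0<\mathbb{P}_l<\mathbb{P}_u$ and $0<\mathbb{S}_l<\mathbb{S}_u$, and let $P_t$ be a positive integrable random variable (the pool price at time $t$ under the risk-neutral pricing measure, with zero interest rate). For $K>0$ let $\mathbf{C}(K)=\mathbb{E}[(P_t-K)^+]$ and $\mathbf{P}(K)=\mathbb{E}[(K-P_t)^+]$ be the European call and put prices with maturity $t$ and strike $K$. With $\mathrm{UIL}^{\mathtt{R}}$ and $\mathrm{UIL}^{\mathtt{L}}$ as defined in the context, $$\mathbb{E}[\mathrm{UIL}^{\mathtt{R}}]=-\tfrac12\int_{\mathbb{P}_l}^{\mathbb{P}_u}K^{-3/2}\mathbf{C}(K)\,\mathrm{d}K,\qquad \mathbb{E}[\mathrm{UIL}^{\mathtt{L}}]=-\tfrac12\int_{\mathbb{S}_l}^{\mathbb{S}_u}K^{-3/2}\mathbf{P}(K)\,\mathrm{d}K.$$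
   Context: Unit impermanent losses per liquidity for the exit price $P_t$: $\mathrm{UIL}^{\mathtt{R}}=\big(2\sqrt{P_t}-\tfrac{P_t}{\sqrt{\mathbb{P}_l}}-\sqrt{\mathbb{P}_l}\big)\mathbf{1}_{\{\mathbb{P}_l\le P_t\le \mathbb{P}_u\}}+\big(\sqrt{\mathbb{P}_u}-\sqrt{\mathbb{P}_l}-(\tfrac{1}{\sqrt{\mathbb{P}_l}}-\tfrac{1}{\sqrt{\mathbb{P}_u}})P_t\big)\mathbf{1}_{\{P_t\ge \mathbb{P}_u\}}$ (liquidity supplied on the interval $[\mathbb{P}_l,\mathbb{P}_u]$ to the right of the initial price), and $\mathrm{UIL}^{\mathtt{L}}=\big(2\sqrt{P_t}-\tfrac{P_t}{\sqrt{\mathbb{S}_u}}-\sqrt{\mathbb{S}_u}\big)\mathbf{1}_{\{\mathbb{S}_l\le P_t\le \mathbb{S}_u\}}+\big((\tfrac{1}{\sqrt{\mathbb{S}_l}}-\tfrac{1}{\sqrt{\mathbb{S}_u}})P_t-\sqrt{\mathbb{S}_u}+\sqrt{\mathbb{S}_l}\big)\mathbf{1}_{\{P_t\le \mathbb{S}_l\}}$ (liquidity supplied on $[\mathbb{S}_l,\mathbb{S}_u]$ to the left of the initial price). Here $y^+=\max(y,0)$. *)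

(* Defs.v *)
From HB Require Import structures.
From mathcomp Require Import all_boot all_order all_algebra.
From mathcomp Require Import all_classical all_reals all_analysis.
Set Implicit Arguments. Unset Strict Implicit. Unset Printing Implicit Defensive.
Import Order.TTheory GRing.Theory Num.Theory.
Local Open Scope ring_scope.

(* Unit impermanent loss (per unit liquidity) for liquidity supplied on
   [Pl, Pu] to the right of the initial price, as a function of exit price p. *)
Definition UIL_R {R : realType} (Pl Pu p : R) : R :=
  if (Pl <= p) && (p <= Pu) then
    2 * Num.sqrt p - p / Num.sqrt Pl - Num.sqrt Pl
  else if Pu <= p then
    Num.sqrt Pu - Num.sqrt Pl - ((Num.sqrt Pl)^-1 - (Num.sqrt Pu)^-1) * p
  else 0.

(* Same, for liquidity supplied on [Sl, Su] to the left of the initial price. *)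
Definition UIL_L {R : realType} (Sl Su p : R) : R :=
  if (Sl <= p) && (p <= Su) then
    2 * Num.sqrt p - p / Num.sqrt Su - Num.sqrt Su
  else if p <= Sl then
    ((Num.sqrt Sl)^-1 - (Num.sqrt Su)^-1) * p - Num.sqrt Su + Num.sqrt Sl
  else 0.

Definition call_price {d} {T : measurableType d} {R : realType}
  (P : probability T R) (X : T -> R) (K : R) : \bar R :=
  ('E_P[fun w => (Num.max (X w - K) 0)%R])%E.
Definition put_price {d} {T : measurableType d} {R : realType}
  (P : probability T R) (X : T -> R) (K : R) : \bar R :=
  ('E_P[fun w => (Num.max (K - X w) 0)%R])%E.

(* Main.v *)
Require Import Defs.
From HB Require Import structures.
From mathcomp Require Import all_boot all_order all_algebra.
From mathcomp Require Import all_classical all_reals all_analysis.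
From mathcomp Require Import measurable_realfun.
Import Order.TTheory GRing.Theory Num.Theory.
From mathcomp Require Import ring lra.
Import numFieldNormedType.Exports.
Local Open Scope classical_set_scope.
Local Open Scope ring_scope.

Section S.
Context {R : realType}.

Let c : R := - (3 / 2).

Lemma powR_c_mul (K : R) : 0 < K -> powR K c * K = powR K (-(1/2)).
Proof.
move=> K0.
have -> : (-(1/2) : R) = c + 1 by rewrite /c; field.
rewrite powRD ?powRr1 ?ltW //.
by rewrite (gt_eqF K0) implybT.
Qed.

Lemma ftc_lin (a b al be : R) : 0 < a -> a < b ->
  (\int[@lebesgue_measure R]_(K in `[a, b]) (powR K c * (al * K + be))%:E =
   (2 * al * powR b (1/2) - 2 * be * powR b (-(1/2)))%:E -
   (2 * al * powR a (1/2) - 2 * be * powR a (-(1/2)))%:E)%E.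
Proof.
move=> a0 ab.
pose G (x : R) := 2 * al * powR x (1/2) - 2 * be * powR x (-(1/2)).
have dG : forall x : R, 0 < x -> is_derive x 1 G (al * powR x (-(1/2)) + be * powR x c).
  move=> x x0.
  have h : is_derive x 1 ((2*al) *: (fun y : R => powR y (1/2)) - (2*be) *: (fun y : R => powR y (-(1/2))))
     ((2*al) *: ((1/2) * x `^ (1/2 - 1)) - (2*be) *: ((-(1/2)) * x `^ (-(1/2) - 1))).
    by apply: is_deriveB; apply: is_deriveZ; exact: is_derive1_powR.
  move: h; congr is_derive.
  rewrite /GRing.scale /= /c.
  have -> : (1/2 - 1 : R) = -(1/2) by field.
  have -> : (-(1/2) - 1 : R) = -(3/2) by field.
  by field.
have Gc : forall y : R, 0 < y -> G z @[z --> y] --> G y.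
  move=> y y0; apply/differentiable_continuous; rewrite -derivable1_diffP.
  by case: (dG y y0).
have df : forall x : R, 0 < x -> derivable (fun K : R => powR K c * (al * K + be)) x 1.
  move=> x x0; apply: derivableM; first by apply: derivable_powR; rewrite in_itv /= x0.
  apply: derivableD; last exact: derivable_cst.
  by apply: derivableM; [exact: derivable_cst|exact: derivable_id].
rewrite (@continuous_FTC2 _ _ G) //.
- apply: derivable_within_continuous => x; rewrite in_itv /= => /andP[ax _].
  by apply: df; exact: lt_le_trans a0 ax.
- split.
  + move=> x; rewrite in_itv /= => /andP[ax _].
    by have [] := dG x (lt_trans a0 ax).
  + by apply: cvg_at_right_filter; apply: Gc.
  + by apply: cvg_at_left_filter; apply: Gc; apply: lt_trans ab.
- move=> x; rewrite in_itv /= => /andP[ax _].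
  have x0 : 0 < x := lt_trans a0 ax.
  rewrite derive1E; have [_ ->] := dG x x0.
  by rewrite mulrDr mulrCA powR_c_mul // (mulrC be).
Qed.

Lemma sqrt_div (x : R) : 0 < x -> x / Num.sqrt x = Num.sqrt x.
Proof.
move=> x0; have s0 : 0 < Num.sqrt x by rewrite sqrtr_gt0.
rewrite -{1}(sqr_sqrtr (ltW x0)) expr2; field; exact: lt0r_neq0.
Qed.

Lemma pow12 (x : R) : 0 < x -> powR x (1/2) = Num.sqrt x.
Proof. by move=> x0; rewrite div1r powR12_sqrt // ltW. Qed.

Lemma powN12 (x : R) : 0 < x -> powR x (-(1/2)) = (Num.sqrt x)^-1.
Proof. by move=> x0; rewrite powRN pow12. Qed.

Lemma mf_R (p : R) : measurable_fun setT (fun K : R => (powR K c * Num.max (p - K) 0)%:E).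
Proof.
apply/measurable_EFinP; apply: measurable_funM; first exact: measurable_powR.
apply: measurable_maxr => //; apply: measurable_funB => //.
Qed.

Lemma mf_L (p : R) : measurable_fun setT (fun K : R => (powR K c * Num.max (K - p) 0)%:E).
Proof.
apply/measurable_EFinP; apply: measurable_funM; first exact: measurable_powR.
apply: measurable_maxr => //; apply: measurable_funB => //.
Qed.


Lemma inner_R (Pl Pu p : R) : 0 < Pl -> Pl < Pu -> 0 < p ->
  (\int[@lebesgue_measure R]_(K in `[Pl, Pu]) (powR K c * Num.max (p - K) 0)%:E =
   (-2 * UIL_R Pl Pu p)%:E)%E.
Proof.
move=> Pl0 PlPu p0.
have sPl := sqrtr_gt0 Pl; rewrite Pl0 in sPl.
have sPu := sqrtr_gt0 Pu; rewrite (lt_trans Pl0 PlPu) in sPu.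
have sp := sqrtr_gt0 p; rewrite p0 in sp.
have [pPl|Plp] := leP p Pl.
  rewrite integral0_eq; last first.
    move=> K; rewrite /= in_itv /= => /andP[h1 h2].
    by rewrite max_r ?mulr0 // subr_le0 (le_trans pPl h1).
  congr (_%:E); rewrite /UIL_R.
  have [->|pPl'] := eqVneq p Pl.
    by rewrite lexx (ltW PlPu) /= sqrt_div //; ring.
  have -> : (Pl <= p) = false by apply/negbTE; rewrite -ltNge lt_neqAle pPl' pPl.
  have -> : (Pu <= p) = false by apply/negbTE; rewrite -ltNge (le_lt_trans pPl PlPu).
  by rewrite mulr0.
have [pPu|Pup] := leP p Pu.
  rewrite (_ : `[Pl, Pu] = `[Pl, p] `|` `]p, Pu])%classic; last first.
    by rewrite -itv_bndbnd_setU // bnd_simp ltW.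
  rewrite ge0_integral_setU //; last 3 first.
  - exact: measurable_funS (mf_R p).
  - move=> K _; rewrite lee_fin mulr_ge0 // ?powR_ge0 // le_max lexx orbT //.
  - rewrite disj_set2E; apply/eqP/seteqP; split => // z [] /=.
    rewrite !in_itv /= => /andP[_ h1] /andP[h2 _]; lra.
  rewrite [X in (_ + X)%E]integral0_eq; last first.
    move=> K; rewrite /= in_itv /= => /andP[h1 h2].
    by rewrite max_r ?mulr0 // subr_le0 ltW.
  rewrite adde0.
  transitivity (\int[@lebesgue_measure R]_(K in `[Pl, p]) (powR K c * (-1 * K + p))%:E)%E.
    apply: eq_integral => K; rewrite inE /= in_itv /= => /andP[h1 h2].
    by rewrite max_l ?subr_ge0 // mulN1r addrC.
  rewrite ftc_lin // -EFinB; congr (_%:E).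
  rewrite (pow12 _ p0) (pow12 _ Pl0) (powN12 _ p0) (powN12 _ Pl0).
  rewrite /UIL_R (ltW Plp) pPu /=.
  have -> : 2 * p * (Num.sqrt p)^-1 = 2 * Num.sqrt p by rewrite -mulrA sqrt_div.
  by field; rewrite ?lt0r_neq0.
transitivity (\int[@lebesgue_measure R]_(K in `[Pl, Pu]) (powR K c * (-1 * K + p))%:E)%E.
  apply: eq_integral => K; rewrite inE /= in_itv /= => /andP[h1 h2].
  by rewrite max_l ?subr_ge0 ?mulN1r 1?addrC // ltW // (le_lt_trans h2).
rewrite ftc_lin // -EFinB; congr (_%:E).
have Pu0 : 0 < Pu := lt_trans Pl0 PlPu.
rewrite (pow12 _ Pu0) (pow12 _ Pl0) (powN12 _ Pu0) (powN12 _ Pl0).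
rewrite /UIL_R (ltW Plp) (ltW Pup) /= leNgt Pup /=.
field; rewrite ?lt0r_neq0 //.
Qed.


Lemma inner_L (Sl Su p : R) : 0 < Sl -> Sl < Su -> 0 < p ->
  (\int[@lebesgue_measure R]_(K in `[Sl, Su]) (powR K c * Num.max (K - p) 0)%:E =
   (-2 * UIL_L Sl Su p)%:E)%E.
Proof.
move=> Sl0 SlSu p0.
have Su0 : 0 < Su := lt_trans Sl0 SlSu.
have sSl := sqrtr_gt0 Sl; rewrite Sl0 in sSl.
have sSu := sqrtr_gt0 Su; rewrite Su0 in sSu.
have sp := sqrtr_gt0 p; rewrite p0 in sp.
have [Sup|pSu] := leP Su p.
  rewrite integral0_eq; last first.
    move=> K; rewrite /= in_itv /= => /andP[h1 h2].
    by rewrite max_r ?mulr0 // subr_le0 (le_trans h2 Sup).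
  congr (_%:E); rewrite /UIL_L.
  have [->|pSu'] := eqVneq p Su.
    by rewrite lexx (ltW SlSu) /= sqrt_div //; ring.
  have -> : (p <= Su) = false.
    by apply/negbTE; rewrite -ltNge lt_neqAle eq_sym pSu' Sup.
  have -> : (p <= Sl) = false.
    by apply/negbTE; rewrite -ltNge (lt_le_trans SlSu Sup).
  by rewrite andbF mulr0.
have [Slp|pSl] := leP Sl p.
  rewrite (_ : `[Sl, Su] = `[Sl, p[ `|` `[p, Su])%classic; last first.
    by rewrite -itv_bndbnd_setU // bnd_simp ltW.
  rewrite ge0_integral_setU //; last 3 first.
  - exact: measurable_funS (mf_L p).
  - move=> K _; rewrite lee_fin mulr_ge0 // ?powR_ge0 // le_max lexx orbT //.
  - rewrite disj_set2E; apply/eqP/seteqP; split => // z [] /=.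
    rewrite !in_itv /= => /andP[_ h1] /andP[h2 _]; lra.
  rewrite [X in (X + _)%E]integral0_eq; last first.
    move=> K; rewrite /= in_itv /= => /andP[h1 h2].
    by rewrite max_r ?mulr0 // subr_le0 ltW.
  rewrite add0e.
  transitivity (\int[@lebesgue_measure R]_(K in `[p, Su]) (powR K c * (1 * K + - p))%:E)%E.
    apply: eq_integral => K; rewrite inE /= in_itv /= => /andP[h1 h2].
    by rewrite max_l ?subr_ge0 // mul1r.
  rewrite ftc_lin // -EFinB; congr (_%:E).
  rewrite (pow12 _ p0) (pow12 _ Su0) (powN12 _ p0) (powN12 _ Su0).
  rewrite /UIL_L Slp (ltW pSu) /=.
  have -> : 2 * - p * (Num.sqrt p)^-1 = - (2 * Num.sqrt p).
    by rewrite mulrN mulNr -mulrA sqrt_div.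
  by field; rewrite ?lt0r_neq0.
transitivity (\int[@lebesgue_measure R]_(K in `[Sl, Su]) (powR K c * (1 * K + - p))%:E)%E.
  apply: eq_integral => K; rewrite inE /= in_itv /= => /andP[h1 h2].
  by rewrite max_l ?subr_ge0 ?mul1r // ltW // (lt_le_trans pSl).
rewrite ftc_lin // -EFinB; congr (_%:E).
rewrite (pow12 _ Su0) (pow12 _ Sl0) (powN12 _ Su0) (powN12 _ Sl0).
rewrite /UIL_L leNgt pSl (ltW pSl) /=.
by field; rewrite ?lt0r_neq0.
Qed.


Lemma main_gen d (T : measurableType d) (P : probability T R) (X : {RV P >-> R})
  (a b : R) (phi : R -> R -> R) (U : R -> R) :
  measurable_fun setT (fun z : R * R => phi z.1 z.2) ->
  (forall x K, 0 <= phi x K) ->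
  (forall w, 0 < X w) ->
  (forall x, 0 < x ->
     (\int[@lebesgue_measure R]_(K in `[a, b]) (powR K c * phi x K)%:E =
      (-2 * U x)%:E)%E) ->
  ('E_P[fun w => U (X w)] =
     (- (1 / 2))%:E *
     \int[@lebesgue_measure R]_(K in `[a, b])
        ((powR K c)%:E * 'E_P[fun w => phi (X w) K]))%E.
Proof.
move=> mphi phi0 Xpos inner.
have mX : measurable_fun setT X by [].
pose f (z : T * R) := ((\1_(`[a, b]%classic) z.2 : R) * powR z.2 c * phi (X z.1) z.2)%:E.
have mf : measurable_fun setT f.
  apply/measurable_EFinP; apply: measurable_funM; first apply: measurable_funM.
  - by apply: measurableT_comp => //; exact: measurable_indic.
  - exact: (measurableT_comp (measurable_powR c) measurable_snd).
  - exact: (measurableT_comp mphi (measurable_fun_pair (measurableT_comp mX measurable_fst) measurable_snd)).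
have f0 : forall z, (0 <= f z)%E.
  by move=> z; rewrite lee_fin !mulr_ge0 // powR_ge0.
have inner_f : forall w, (\int[@lebesgue_measure R]_K f (w, K) = (-2 * U (X w))%:E)%E.
  move=> w; rewrite -inner // [RHS]integral_mkcond.
  apply: eq_integral => K _; rewrite /f /patch /= indicE.
  by case: ifP => _; rewrite ?mul1r ?mul0r.
have g0 : forall w, 0 <= -2 * U (X w).
  by move=> w; rewrite -lee_fin -inner_f; apply: integral_ge0 => K _.
have mg : measurable_fun setT (fun w => (-2 * U (X w))%:E).
  rewrite (_ : (fun w => _) = fubini_F (@lebesgue_measure R) f).
    exact: measurable_fun_fubini_tonelli_F.
  by apply: boolp.funext => w; rewrite /fubini_F inner_f.
have eR : (\int[@lebesgue_measure R]_(K in `[a, b])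
        ((powR K c)%:E * 'E_P[fun w => phi (X w) K]) =
        \int[P]_w (-2 * U (X w))%:E)%E.
  transitivity (\int[@lebesgue_measure R]_K \int[P]_w f (w, K))%E.
    rewrite integral_mkcond; apply: eq_integral => K _.
    rewrite /patch; case: ifP => KI.
      rewrite unlock -ge0_integralZl_EFin //.
      - by apply: eq_integral => w _; rewrite /f indicE /= KI mul1r EFinM.
      - by move=> w _; rewrite lee_fin.
      - apply/measurable_EFinP.
        exact: (measurableT_comp mphi (measurable_fun_pair mX (measurable_cst K))).
      - exact: powR_ge0.
    by rewrite integral0_eq // => w _; rewrite /f indicE /= KI !mul0r.
  rewrite -(@fubini_tonelli _ _ _ _ _ P (@lebesgue_measure R) f mf f0).
  by apply: eq_integral => w _; exact: inner_f.
rewrite eR unlock.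
transitivity (\int[P]_w (- ((1/2)%:E * (-2 * U (X w))%:E)))%E.
  by apply: eq_integral => w _; rewrite -EFinM -EFinN; congr (_%:E); field.
rewrite integralN; last first.
  rewrite [X in (_ +? - X)%E]integral0_eq ?oppe0 ?fin_num_adde_defl // => w _.
  rewrite funenegE; apply/max_idPr.
  by rewrite leeNl oppe0 mule_ge0 // lee_fin.
rewrite ge0_integralZl_EFin //.
- by rewrite EFinN mulNe.
- by move=> w _; rewrite lee_fin.
Qed.

End S.

Theorem proposition2 (d : measure_display) (T : measurableType d) (R : realType)
  (P : probability T R) (X : {RV P >-> R})
  (Pl Pu Sl Su : R)
  (hP : 0 < Pl < Pu) (hS : 0 < Sl < Su)
  (Xpos : forall w, 0 < X w)
  (Xint : P.-integrable setT (EFin \o X)) :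
  ('E_P[fun w => UIL_R Pl Pu (X w)] =
     (- (1 / 2))%:E *
     \int[@lebesgue_measure R]_(K in `[Pl, Pu])
        ((powR K (- (3 / 2)))%:E * call_price P X K))%E /\
  ('E_P[fun w => UIL_L Sl Su (X w)] =
     (- (1 / 2))%:E *
     \int[@lebesgue_measure R]_(K in `[Sl, Su])
        ((powR K (- (3 / 2)))%:E * put_price P X K))%E.
Proof.
case/andP: hP => Pl0 PlPu; case/andP: hS => Sl0 SlSu.
split.
- apply: (@main_gen R d T P X Pl Pu (fun x K => Num.max (x - K) 0)) => //.
  + apply: measurable_maxr => //.
    exact: measurable_funB measurable_fst measurable_snd.
  + by move=> x K; rewrite le_max lexx orbT.
  + by move=> x x0; apply: inner_R.
- apply: (@main_gen R d T P X Sl Su (fun x K => Num.max (K - x) 0)) => //.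
  + apply: measurable_maxr => //.
    exact: measurable_funB measurable_snd measurable_fst.
  + by move=> x K; rewrite le_max lexx orbT.
  + by move=> x x0; apply: inner_L.
Qed.
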